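(* Let $G$ be a countable group and $\nu$ a probability measure of full support on $G$; let $(z_1,z_2,\ldots)$, $z_n = x_1\cdots x_n$, denote a trajectory of the $\nu$-random walk. Let $W_i, W'_i\subseteq G$, $i\in\mathbb N$, be subsets with $W'_i\subseteq W_i$ for all $i$ and $W_i\cap W_j=\varnothing$ for $i\neq j$. For $g\in G$ let $\mathrm{rank}(g)=i$ if $g\in W_i$ and $\mathrm{rank}(g)=0$ if $g\notin\bigcup_i W_i$. Let $p:\bigcup_{i}W_i\to G$ be a function. Assume: (1) $\mathrm{rank}(p(g))<\mathrm{rank}(g)$ for every $g\in\bigcup_i W_i$; (2) for every $h\in G$ there is $N$ such that for all $i>N$ we have $hW'_i\subseteq W_i$ and $p(hw)=h\,p(w)$ for all $w\in W'_i$; (3) for almost every trajectory $(z_1,z_2,\ldots)$ there is $i_0$ such that for every $i>i_0$ there is $j$ with $z_i\in W'_j$; (4) for almost every trajectory there is $i_0$ such that for all $i>i_0$, either $p(z_{i+1})=p(z_i)$ or $p(z_{i+1})=z_i$; (5) for almost every trajectory the sequence $(\mathrm{rank}(z_i))_i$ is unbounded. Then the Poisson–Furstenberg boundary $\partial(G,\nu)$ is non-trivial, and moreover the action of $G$ on $\partial(G,\nu)$ is essentially free.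
   Context: The Poisson–Furstenberg boundary $\partial(G,\nu)$ is the space of ergodic components of the time shift on the space $G^{\mathbb N}$ of trajectories of the $\nu$-random walk (for non-degenerate $\nu$ equivalently the tail boundary), with $G$ acting by left multiplication on trajectories. Essentially free means that for each $h\neq 1$, almost every boundary point is not fixed by $h$. *)

(* Defs.v *)
From HB Require Import structures.
From mathcomp Require Import all_boot all_order all_algebra.
From mathcomp Require Import all_classical all_reals all_analysis.

Set Implicit Arguments.
Unset Strict Implicit.
Unset Printing Implicit Defensive.

Import Order.TTheory GRing.Theory Num.Theory.
Local Open Scope classical_set_scope.

#[short(type="countGroupType")]
HB.structure Definition CountGroup := {G of Group G & Countable G}.

Section RandomWalk.
Variable G : countGroupType.

(** The space of trajectories [w : nat -> G]; [w n] is [z_n = x_1 ... x_n],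
    with [z_0 = 1]. *)
Definition traj := nat -> G.
HB.instance Definition _ := gen_eqMixin traj.
HB.instance Definition _ := gen_choiceMixin traj.
HB.instance Definition _ := isPointed.Build traj (fun _ => 1%g).

(** Cylinder sets [{w | w n = g}]; they generate the product sigma-algebra
    of the discrete space G on G^nat. *)
Definition cylinders : set (set traj) :=
  [set A | exists (n : nat) (g : G), A = [set w : traj | w n = g]].

Definition Omega := g_sigma_algebraType cylinders.

Definition shift (w : Omega) : Omega := fun n => w n.+1.
Definition lact (h : G) (w : Omega) : Omega := fun n => (h * w n)%g.

Variable R : realType.

(** These finite-dimensional distributions determine P uniquely. *)
Definition random_walk_law (nu : G -> R) (P : probability Omega R) : Prop :=
  forall (n : nat) (g : nat -> G),
    P [set w : Omega | forall k, (k <= n)%N -> w k = g k] =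
    (((g 0%N == 1%g)%:R * \prod_(k < n) nu ((g k)^-1 * g k.+1)%g)%R)%:E.

(** Shift-invariant measurable sets: the sigma-algebra whose (mod 0) quotient
    is the space of ergodic components of the shift, i.e. the Poisson boundary. *)
Definition shift_invariant (A : set Omega) : Prop :=
  measurable A /\ shift @^-1` A = A.

Definition boundary_nontrivial (P : probability Omega R) : Prop :=
  exists A : set Omega, shift_invariant A /\ (0 < P A)%E /\ (P A < 1)%E.

(** The boundary point
    of [w] is its ergodic component; the boundary point of [w] and that of
    [h w] (= h applied to the boundary point of w) differ iff some member of a
    countable family of invariant sets separates them (the boundary is a
    standard measure space, so its Borel structure is countably separated). *)
Definition boundary_essentially_free (P : probability Omega R) : Prop :=
  forall h : G, h <> 1%g ->
    exists A : nat -> set Omega,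
      (forall k, shift_invariant (A k)) /\
      {ae P, forall w : Omega, exists k,
          (A k w /\ ~ A k (lact h w)) \/ (~ A k w /\ A k (lact h w))}.

End RandomWalk.

(** rank g = i if g \in W_i, and 0 if g is in no W_i
    (well defined when the W_i are pairwise disjoint). *)
Definition rank (G : Type) (W : nat -> set G) (g : G) : nat :=
  match pselect (exists i, W i g) with
  | left e => projT1 (cid e)
  | right _ => 0%N
  end.

(* Main.v *)
Require Import Defs.
From HB Require Import structures.
From mathcomp Require Import all_boot all_order all_algebra.
From mathcomp Require Import all_classical all_reals all_analysis.
From mathcomp Require Import zify.

Import Order.TTheory GRing.Theory Num.Theory.
Local Open Scope classical_set_scope.

Set Implicit Arguments.
Unset Strict Implicit.
Unset Printing Implicit Defensive.

Section Meas.
Variable G : countGroupType.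
Local Notation Om := (Omega G).

Lemma cyl_meas (i : nat) (x : G) : measurable [set w : Om | w i = x].
Proof. by apply: sub_sigma_algebra; exists i, x. Qed.

Lemma coord_meas (i : nat) (Q : set G) : measurable [set w : Om | Q (w i)].
Proof.
pose F k : set Om := [set w | Some (w i) = unpickle k /\ Q (w i)].
have -> : [set w : Om | Q (w i)] = \bigcup_k F k.
  apply/seteqP; split => w /=.
    by move=> Qw; exists (pickle (w i)) => //; rewrite /F /= pickleK.
  by case=> k _ [].
apply: bigcupT_measurable => k; rewrite /F.
case: (unpickle k) => [x|]; last first.
  by have -> : [set w : Om | Some (w i) = None /\ Q (w i)] = set0
    by apply/seteqP; split => w //= [].
case: (pselect (Q x)) => Qx.
  have -> : [set w : Om | Some (w i) = Some x /\ Q (w i)] = [set w | w i = x].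
    by apply/seteqP; split => w /= => [[[]]|->].
  exact: cyl_meas.
have -> : [set w : Om | Some (w i) = Some x /\ Q (w i)] = set0.
  by apply/seteqP; split => w //= [[->]].
by [].
Qed.

Definition Sset (Q : nat -> G -> Prop) : set Om :=
  [set w | forall M, exists i, (M <= i)%N /\ Q M (w i)].

Lemma Sset_inv (Q : nat -> G -> Prop) (mono : forall M x, Q M.+1 x -> Q M x) :
  shift_invariant (Sset Q).
Proof.
split.
  have -> : Sset Q = \bigcap_M \bigcup_i [set w : Om | (M <= i)%N /\ Q M (w i)].
    apply/seteqP; split => w /= H M.
      by move=> _; have [i [? ?]] := H M; exists i.
    by have [i _ ?] := H M I; exists i.
  apply: bigcapT_measurable => M; apply: bigcupT_measurable => i.
  exact: (coord_meas i (fun x => (M <= i)%N /\ Q M x)).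
apply/seteqP; split => w /= H M.
  have [i [Mi Qi]] := H M.
  by exists i.+1; split; [exact: leqW|].
have [i [Mi Qi]] := H M.+1.
case: i Mi Qi => // i Mi Qi; exists i; split => //.
exact: mono.
Qed.
End Meas.
Section Gen.
Local Open Scope ring_scope.
Variable G : countGroupType.
Local Notation Om := (Omega G).


Definition cyl (n : nat) (g : nat -> G) : set (traj G) :=
  [set w | forall k, (k <= n)%N -> w k = g k].

Lemma cylM n g : measurable (cyl n g : set Om).
Proof.
have -> : (cyl n g : set Om) = \bigcap_(k in [set k | (k <= n)%N]) [set w : Om | w k = g k].
  by apply/seteqP; split => w /= H k; [move=> kn; exact: H|exact: H].
by apply: bigcap_measurable; [exists 0%N|move=> k _; exact: cyl_meas].
Qed.

Definition Gen : set (set (traj G)) :=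
  [set A | A = setT \/ A = set0 \/ exists n g, A = cyl n g].

Definition Om2 := g_sigma_algebraType Gen.

Lemma Gen_closed : setI_closed Gen.
Proof.
have key n m g g' : (n <= m)%N -> Gen (cyl n g `&` cyl m g').
  move=> nm; case: (pselect (forall k, (k <= n)%N -> g k = g' k)) => H.
    right; right; exists m, g'; apply/seteqP; split => w /=.
      by case.
    move=> Hw; split => // k kn; rewrite H // Hw //; exact: leq_trans nm.
  right; left; apply/seteqP; split => w //= [H1 H2]; apply: H => k kn.
  by rewrite -H1 // H2 //; exact: leq_trans nm.
move=> A B [->|[->|[n [g ->]]]] [->|[->|[m [g' ->]]]];
  rewrite ?setTI ?setIT ?set0I ?setI0; try by [left|right;left|right;right;eauto].
case: (leqP n m) => nm; first exact: key.
by rewrite setIC; apply: key; exact: ltnW.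
Qed.

Lemma id_meas1 : measurable_fun (setT : set Om) (id : Om -> Om2).
Proof.
apply: (@measurability _ _ Om Om2 setT id Gen) => //.
move=> _ [A GA <-]; rewrite setTI preimage_id.
case: GA => [->|[->|[n [g ->]]]]; [exact: measurableT|exact: measurable0|exact: cylM].
Qed.

Lemma id_meas2 : measurable_fun (setT : set Om2) (id : Om2 -> Om).
Proof.
apply: (@measurability _ _ Om2 Om setT id (@cylinders G)) => //.
move=> _ [A [n [x ->]] <-]; rewrite setTI preimage_id.
pose D m (g : nat -> G) : set Om2 := [set w | forall k, (m <= k <= n)%N -> w k = g k].
suff H : forall m g, (m <= n)%N -> measurable (D m g).
  have -> : [set w : traj G | w n = x] = D n (fun _ => x).
    apply/seteqP; split => w /=; first by move=> <- k /andP[a b]; have -> : k = n by apply/eqP; rewrite eqn_leq b a.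
    by move=> H'; apply: H'; rewrite leqnn.
  exact: H.
elim=> [|m IH] g mn.
  have -> : D 0%N g = cyl n g by apply/seteqP; split => w /= H k kn; apply: H.
  by apply: sub_sigma_algebra; right; right; exists n, g.
have -> : D m.+1 g = \bigcup_k (match @unpickle G k with
     | Some y => D m (fun j => if j == m then y else g j) | None => set0 end).
  apply/seteqP; split => w /=.
    move=> H; exists (pickle (w m)) => //; rewrite pickleK => k /andP[a b].
    case: eqP => [->//|km]; apply: H; rewrite b andbT ltn_neqAle a andbT.
    by apply/eqP => e; apply: km.
  case=> k _; case: (unpickle k) => [y|//] H j /andP[a b].
  have := H j; rewrite (leq_trans (leqnSn m) a) b /= => ->//.
  by case: eqP => // e; move: a; rewrite e ltnn.
apply: bigcupT_measurable => k; case: (unpickle k) => [y|]; last exact: measurable0.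
by apply: IH; exact: ltnW.
Qed.

Lemma measurable_Gen : @measurable _ Om = <<s Gen >>.
Proof.
apply/seteqP; split => A mA.
  by have := id_meas2 measurableT mA; rewrite setTI preimage_id.
by have := id_meas1 measurableT mA; rewrite setTI preimage_id.
Qed.
End Gen.

Section MeasEq.
Local Open Scope ring_scope.
Variable R : realType.
Variable G : countGroupType.
Local Notation Om := (Omega G).
Variable nu : G -> R.
Hypothesis nu_pos : forall g, 0 < nu g.
Variable P : probability Om R.
Hypothesis law : random_walk_law nu P.

Lemma mshift : measurable_fun setT (@Defs.shift G).
Proof.
apply: (@measurability _ _ Om Om setT _ (@cylinders G)) => //.
move=> _ [A [n [g ->]] <-]; rewrite setTI.
exact: (cyl_meas n.+1 g).
Qed.

Lemma mlact h : measurable_fun setT (@lact G h).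
Proof.
apply: (@measurability _ _ Om Om setT _ (@cylinders G)) => //.
move=> _ [A [n [g ->]] <-]; rewrite setTI.
have -> : @lact G h @^-1` [set w : traj G | w n = g] = [set w | w n = h^-1 * g]%g.
  apply/seteqP; split => w /=; rewrite /lact; first by move=> <-; rewrite mulKg.
  by move=> ->; rewrite mulVKg.
exact: cyl_meas.
Qed.

Definition mu1 (h : G) : {measure set Om -> \bar R}.
refine (pushforward (mrestr P (cyl_meas 1 h)) (@Defs.shift G) : {measure set Om -> \bar R}).
exact: mshift.
Defined.

Definition mu2 (h : G) : {measure set Om -> \bar R}.
refine (mscale (NngNum (ltW (nu_pos h))) (pushforward P (@lact G h) : {measure set Om -> \bar R})).
exact: mlact.
Defined.

Lemma mu1E h A : mu1 h A = P (@Defs.shift G @^-1` A `&` [set w | w 1%N = h]).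
Proof. by []. Qed.
Lemma mu2E h A : mu2 h A = ((nu h)%:E * P (@lact G h @^-1` A))%E.
Proof. by []. Qed.

Lemma P_cyl n g : P (cyl n g) = ((g 0%N == 1%g)%:R * \prod_(k < n) nu ((g k)^-1 * g k.+1)%g)%:E.
Proof. exact: law. Qed.

Lemma P_w0 S : measurable S -> P S = P (S `&` cyl 0 (fun _ => 1%g)).
Proof.
move=> mS; rewrite (measureDI P mS (cylM 0 (fun _ => 1%g))).
rewrite -[RHS]add0e; congr (_ + _)%E.
apply: (@subset_measure0 _ _ _ P _ (~` cyl 0 (fun _ => 1%g))).
- by apply: measurableD => //; exact: cylM.
- by apply: measurableC; exact: cylM.
- by move=> w [].
apply: (eq_trans (probability_setC P (cylM 0 (fun _ => 1%g)))).
rewrite P_cyl.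
by rewrite big_ord0 eqxx mulr1 subee.
Qed.

Lemma mu12_cyl h n g : mu1 h (cyl n g) = mu2 h (cyl n g).
Proof.
rewrite mu1E mu2E.
have -> : @lact G h @^-1` cyl n g = cyl n (fun k => h^-1 * g k)%g.
  apply/seteqP; split => w /= H k kn; have := H k kn; rewrite /lact.
    by move=> <-; rewrite mulKg.
  by move=> ->; rewrite mulVKg.
rewrite P_cyl.
have hh a b : ((h^-1 * a)^-1 * (h^-1 * b) = a^-1 * b)%g.
  by rewrite invgM invgK -mulgA mulVKg.
under eq_bigr do rewrite hh.
case: (eqVneq (g 0%N) h) => [g0h|g0h].
  have -> : (h^-1 * g 0%N == 1)%g by rewrite g0h mulVg.
  pose g' k := if k is k'.+1 then g k' else 1%g.
  have -> : @Defs.shift G @^-1` cyl n g `&` [set w | w 1%N = h] = [set w | forall k, (k <= n)%N -> w k.+1 = g k].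
    apply/seteqP; split => w /=; first by case.
    by move=> H; split => //; rewrite -g0h; exact: H.
  rewrite P_w0; last first.
    have -> : [set w : Om | forall k, (k <= n)%N -> w k.+1 = g k] = @Defs.shift G @^-1` cyl n g by [].
    rewrite -[X in measurable X]setTI; apply: mshift => //; exact: cylM.
  have -> : [set w : Om | forall k, (k <= n)%N -> w k.+1 = g k] `&` cyl 0 (fun _ => 1%g) = cyl n.+1 g'.
    apply/seteqP; split => w /=.
      by case=> H1 H2 [|k] kn; [exact: H2|exact: H1].
    by move=> H; split => [k kn|k k0]; [exact: (H k.+1)|move: k0; rewrite leqn0 => /eqP->; exact: (H 0%N)].
  rewrite P_cyl big_ord_recl /= eqxx invg1 mul1g g0h mul1r.
  by rewrite -EFinM mul1r.
have -> : (h^-1 * g 0%N == 1)%g = false.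
  apply/negbTE/eqP => e; move/eqP: g0h; apply.
  by rewrite -[g 0%N](mulVKg h) e mulg1.
rewrite mul0r mule0.
have -> : @Defs.shift G @^-1` cyl n g `&` [set w | w 1%N = h] = set0.
  apply/seteqP; split => w //= [H e]; move/eqP: g0h; apply.
  by rewrite -(H 0%N) // e.
by rewrite measure0.
Qed.

Lemma key h A : measurable A -> mu1 h A = mu2 h A.
Proof.
move=> mA.
apply: (@measure_unique _ R Om (@Gen G) (fun _ => setT) _ _ _ _ (mu1 h) (mu2 h)) => //.
- exact: measurable_Gen.
- exact: Gen_closed.
- by move=> _; left.
- by apply/seteqP; split => // w _; exists 0%N.
- move=> B [->|[->|[n [g ->]]]]; last exact: mu12_cyl.
  + rewrite mu1E mu2E preimage_setT setTI.
    rewrite probability_setT mule1 P_w0; last exact: cyl_meas.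
    have -> : [set w : Om | w 1%N = h] `&` cyl 0 (fun _ => 1%g) = cyl 1 (fun k => if k is 0%N then 1%g else h).
      apply/seteqP; split => w /=.
        by case=> H1 H2 [|[|k]] // _; exact: H2.
      by move=> H; split; [exact: (H 1%N)|move=> k; rewrite leqn0 => /eqP ->; exact: (H 0%N)].
    by rewrite P_cyl big_ord_recl big_ord0 /= eqxx invg1 mul1g mul1r mulr1.
  + by rewrite !measure0.
- move=> _; rewrite mu1E; apply: (le_lt_trans (probability_le1 P _)) => //.
  apply: measurableI; last exact: cyl_meas.
  rewrite -[X in measurable X]setTI; exact: mshift.
exact: ltry.
Qed.


Lemma PE1 h : P [set w : Om | w 1%N = h] = (nu h)%:E.
Proof.
have := key h measurableT; rewrite mu1E mu2E preimage_setT setTI.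
by rewrite probability_setT mule1.
Qed.

Lemma transfer h A : shift_invariant A -> P A = 0%E \/ P A = 1%E ->
  P (@lact G h @^-1` A) = P A.
Proof.
move=> [mA invA] PA.
have K := key h mA; rewrite mu1E mu2E invA in K.
have mL : measurable (@lact G h @^-1` A).
  by rewrite -[X in measurable X]setTI; exact: mlact.
have nh0 : ((nu h)%:E != 0 :> \bar R)%E by rewrite eqe gt_eqF.
case: PA => PA.
  have : P (A `&` [set w | w 1%N = h]) = 0%E.
    apply: (@subset_measure0 _ _ _ P _ A) => //.
    by apply: measurableI => //; exact: cyl_meas.
  by rewrite K PA => /eqP; rewrite mule_eq0 (negbTE nh0) /= => /eqP ->.
have : P (A `&` [set w | w 1%N = h]) = (nu h)%:E.
  rewrite -PE1 (measureDI P (cyl_meas 1 h) mA) setIC.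
  rewrite -[LHS]add0e; congr (_ + _)%E; apply/esym.
  apply: (@subset_measure0 _ _ _ P _ (~` A)).
  - by apply: measurableD => //; exact: cyl_meas.
  - exact: measurableC.
  - by move=> w [].
  by apply: (eq_trans (probability_setC P mA)); rewrite PA subee.
rewrite K PA => E.
move: E (measure_ge0 P (@lact G h @^-1` A)) (probability_le1 P mL).
case: (P (@lact G h @^-1` A)) => [r| |] //=.
  move=> /eqP; rewrite -EFinM eqe => /eqP E _ _; congr EFin.
  apply: (mulfI (negbT (gt_eqF (nu_pos h)))); by rewrite E mulr1.
by rewrite mulrNy gtr0_sg ?nu_pos // mul1e; case.
Qed.


Lemma nontriv_of_free (h : G) : h <> 1%g -> boundary_essentially_free P ->
  boundary_nontrivial P.
Proof.
move=> h1 Hfree; case: (pselect (boundary_nontrivial P)) => // NT; exfalso.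
have [A [invA aeA]] := Hfree h h1.
have P01 k : P (A k) = 0%E \/ P (A k) = 1%E.
  have [mk ik] := invA k.
  have ge := measure_ge0 P (A k); have le := probability_le1 P mk.
  move: ge; rewrite le_eqVlt => /orP[/eqP <-|lt0]; first by left.
  right; apply/eqP; rewrite eq_le le /=; rewrite leNgt; apply/negP => lt1.
  by apply: NT; exists (A k).
pose L k := @lact G h @^-1` A k.
have mL k : measurable (L k).
  by rewrite -[X in measurable X]setTI; apply: mlact => //; case: (invA k).
have negB k : P.-negligible ((A k `\` L k) `|` (L k `\` A k)).
  have [mk ik] := invA k.
  have TL := transfer h (invA k) (P01 k).
  case: (P01 k) => PA.
    apply: negligibleU.
      by apply: (@negligibleS _ _ _ P (A k)); [move=> w []|apply/negligibleP].
    apply: (@negligibleS _ _ _ P (L k)); first by move=> w [].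
    apply/negligibleP => //.
    exact: (eq_trans TL PA).
  apply: negligibleU.
    apply: (@negligibleS _ _ _ P (~` L k)); first by move=> w [].
    apply/negligibleP; first exact: measurableC.
    by apply: (eq_trans (probability_setC P (mL k))); rewrite (eq_trans TL PA) subee.
  apply: (@negligibleS _ _ _ P (~` A k)); first by move=> w [].
  apply/negligibleP; first exact: measurableC.
  by apply: (eq_trans (probability_setC P mk)); rewrite PA subee.
have : P.-negligible (setT : set Om).
  apply: (@negligibleS _ _ _ P (~` [set w | exists k, (A k w /\ ~ A k (@lact G h w)) \/ (~ A k w /\ A k (@lact G h w))] `|` \bigcup_k ((A k `\` L k) `|` (L k `\` A k)))).
    move=> w _; case: (pselect (exists k, (A k w /\ ~ A k (@lact G h w)) \/ (~ A k w /\ A k (@lact G h w)))) => [[k Hk]|Hn]; last by left.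
    right; exists k => //; case: Hk => -[a b]; [left|right]; split => //.
  apply: negligibleU; first exact: aeA.
  exact: negligible_bigcup.
case=> B [mB PB TB].
have : P B = 1%E.
  have -> : B = setT by apply/seteqP; split.
  exact: probability_setT.
by rewrite PB => -[] /eqP; rewrite eq_sym oner_eq0.
Qed.
Lemma ae_false : ~ {ae P, forall w : Om, False}.
Proof.
move=> [B [mB PB TB]].
have : P B = 1%E.
  have -> : B = setT by apply/seteqP; split => // w _; apply: TB.
  exact: probability_setT.
by rewrite PB => -[] /eqP; rewrite eq_sym oner_eq0.
Qed.
End MeasEq.

Section Comb.
Variable G : countGroupType.
Variables (W W' : nat -> set G) (p : G -> G).
Hypothesis W'W : forall i, W' i `<=` W i.
Hypothesis Wdisj : forall i j : nat, i <> j -> W i `&` W j = set0.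
Hypothesis H1 : forall g : G, (\bigcup_i W i) g -> (Defs.rank W (p g) < Defs.rank W g)%N.
Hypothesis H2 : forall h : G, exists N : nat, forall i : nat, (N < i)%N ->
      [set (h * w)%g | w in W' i] `<=` W i /\
      (forall w : G, W' i w -> p (h * w)%g = (h * p w)%g).

Lemma rankE j x : W j x -> Defs.rank W x = j.
Proof.
move=> Wj; rewrite /Defs.rank; case: pselect => [e|ne]; last by exfalso; apply: ne; exists j.
case: cid => i /= Wi; case: (eqVneq i j) => // /eqP ij.
have : (W i `&` W j) x by [].
by rewrite Wdisj //; apply/eqP.
Qed.

Lemma rankE' j x : W' j x -> Defs.rank W x = j.
Proof. by move=> /W'W; exact: rankE. Qed.

Definition Qf (b : bool) (g : G) (M : nat) (x : G) : Prop :=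
  exists j, (M <= j)%N /\ W' j x /\
    (if b then exists n, iter n p (p x) = g else p x = g).

Lemma Qf_mono b g M x : Qf b g M.+1 x -> Qf b g M x.
Proof. by case=> j [Mj H]; exists j; split => //; exact: ltnW. Qed.

Definition good (w : traj G) : Prop :=
  (exists i0, forall i, (i0 < i)%N -> exists j, W' j (w i)) /\
  (exists i0, forall i, (i0 < i)%N -> p (w i.+1) = p (w i) \/ p (w i.+1) = w i) /\
  (forall M, exists i, (M < Defs.rank W (w i))%N).

Section Good.
Variable w : traj G.
Hypothesis gw : good w.
Variable h : G.
Hypothesis h1 : h <> 1%g.

Lemma good_i1 : exists i1, forall i, (i1 <= i)%N ->
  (exists j, W' j (w i)) /\ (p (w i.+1) = p (w i) \/ p (w i.+1) = w i).
Proof.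
case: gw => [[a Ha] [[b Hb] _]]; exists (maxn a b).+1 => i Hi; split.
  by apply: Ha; apply: leq_trans Hi; rewrite ltnS leq_maxl.
by apply: Hb; apply: leq_trans Hi; rewrite ltnS leq_maxr.
Qed.

End Good.

Lemma fin_bound (f : nat -> nat) n : exists B, forall k, (k < n)%N -> (f k <= B)%N.
Proof.
elim: n => [|n [B HB]]; first by exists 0%N.
exists (maxn B (f n)) => k; rewrite ltnS leq_eqVlt => /orP[/eqP ->|kn].
  exact: leq_maxr.
exact: leq_trans (HB k kn) (leq_maxl _ _).
Qed.

Section Good2.
Variable w : traj G.
Variable i1 : nat.
Hypothesis Hi1 : forall i, (i1 <= i)%N ->
  (exists j, W' j (w i)) /\ (p (w i.+1) = p (w i) \/ p (w i.+1) = w i).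
Hypothesis Hunb : forall M, exists i, (M < Defs.rank W (w i))%N.
Variable h : G.
Hypothesis h1 : h <> 1%g.
Variables N1 N2 : nat.
Hypothesis HN1 : forall i : nat, (N1 < i)%N ->
      [set (h * w)%g | w in W' i] `<=` W i /\
      (forall w : G, W' i w -> p (h * w)%g = (h * p w)%g).
Hypothesis HN2 : forall i : nat, (N2 < i)%N ->
      [set (h^-1 * w)%g | w in W' i] `<=` W i /\
      (forall w : G, W' i w -> p (h^-1 * w)%g = (h^-1 * p w)%g).

Lemma L_unb M m : exists i, (m <= i)%N /\ exists j, (M <= j)%N /\ W' j (w i).
Proof.
have [B HB] := fin_bound (fun k => Defs.rank W (w k)) (m + i1).
have [i Hi] := Hunb (maxn B M).
have ge : (m + i1 <= i)%N.
  rewrite leqNgt; apply/negP => lt.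
  have le := HB i lt; move: Hi; rewrite ltnNge; apply/negP/negPn.
  exact: leq_trans le (leq_maxl B M).
have [[j Wj] _] := Hi1 (leq_trans (leq_addl m i1) ge).
exists i; split; first exact: leq_trans (leq_addr i1 m) ge.
exists j; split => //; rewrite -(rankE' Wj); apply: ltnW.
exact: leq_ltn_trans (leq_maxr B M) Hi.
Qed.

Lemma pull j x : (N2 < j)%N -> W' j (h * x)%g -> p (h * x)%g = (h * p x)%g.
Proof.
move=> Nj Wj; have [_ Hp] := HN2 Nj; have := Hp _ Wj; rewrite mulKg => ->.
by rewrite mulVKg.
Qed.

Lemma caseA m : (forall i, (m <= i)%N -> p (w i.+1) = p (w i)) ->
  Sset (Qf false (p (w m))) w /\ ~ Sset (Qf false (p (w m))) (lact h w).
Proof.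
move=> Hm.
have pc i : (m <= i)%N -> p (w i) = p (w m).
  elim: i => [|i IH]; first by rewrite leqn0 => /eqP ->.
  rewrite leq_eqVlt => /orP[/eqP <-//|]; rewrite ltnS => mi.
  by rewrite Hm // IH.
split.
  move=> M; have [i [mi [j [Mj Wj]]]] := L_unb M (maxn M m).
  exists i; split; first exact: leq_trans (leq_maxl M m) mi.
  exists j; split => //; split => //; apply: pc; exact: leq_trans (leq_maxr M m) mi.
move=> /(_ (maxn m N2.+1)) [i [Mi [j [Mj [Wj pj]]]]].
have Nj : (N2 < j)%N by apply: leq_trans (leq_maxr m N2.+1) Mj.
have := pull Nj Wj; rewrite /lact in pj; rewrite pj pc; last first.
  exact: leq_trans (leq_maxl m N2.+1) Mi.
move=> e; apply: h1; apply: (mulIg (p (w m))); rewrite mul1g.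
by rewrite -e.
Qed.

Definition ch t := (i1 <= t)%N /\ p (w t.+1) = w t.

Lemma inW i : (i1 <= i)%N -> (\bigcup_j W j) (w i).
Proof. by move=> /Hi1 [[j Wj] _]; exists j => //; exact: W'W. Qed.

Lemma rank_lt i : (i1 <= i)%N -> (Defs.rank W (p (w i)) < Defs.rank W (w i))%N.
Proof. by move=> /inW; exact: H1. Qed.

Lemma F1 t : ch t -> forall i, (t < i)%N -> exists n, iter n p (p (w i)) = w t.
Proof.
move=> [it ct]; elim=> // i IH; rewrite ltnS leq_eqVlt => /orP[/eqP <-|ti].
  by exists 0%N.
have [n en] := IH ti.
have [_ [->|->]] := Hi1 (leq_trans it (ltnW ti)); first by exists n.
by exists n.+1; rewrite iterSr.
Qed.

Lemma F2 t : ch t -> forall i, (t < i)%N -> (Defs.rank W (w t) <= Defs.rank W (p (w i)))%N.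
Proof.
move=> [it ct]; elim=> // i IH; rewrite ltnS leq_eqVlt => /orP[/eqP <-|ti].
  by rewrite ct.
have [_ [->|->]] := Hi1 (leq_trans it (ltnW ti)); first exact: IH.
apply: ltnW; apply: leq_ltn_trans (IH ti) _; apply: rank_lt.
exact: leq_trans it (ltnW ti).
Qed.

Lemma F2' t i : ch t -> (t < i)%N -> (Defs.rank W (w t) < Defs.rank W (w i))%N.
Proof.
move=> cht ti; apply: leq_ltn_trans (F2 cht ti) _; apply: rank_lt.
by case: cht => it _; exact: leq_trans it (ltnW ti).
Qed.

Lemma par_ch t0 : ch t0 -> forall i, (t0 < i)%N ->
  exists s, [/\ (t0 <= s)%N, (s < i)%N, ch s & p (w i) = w s].
Proof.
move=> cht0; have [it0 ct0] := cht0.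
elim=> // i IH; rewrite ltnS leq_eqVlt => /orP[/eqP <-|ti].
  by exists t0; split.
have [s [s1 s2 s3 s4]] := IH ti.
have [_ [e|e]] := Hi1 (leq_trans it0 (ltnW ti)).
  by exists s; split => //; [exact: ltnW|rewrite e].
exists i; split => //; first exact: ltnW.
by split => //; exact: leq_trans it0 (ltnW ti).
Qed.

Hypothesis caseB : forall m, exists i, (m <= i)%N /\ p (w i.+1) <> p (w i).

Lemma chex m : exists t, (m <= t)%N /\ ch t.
Proof.
have [i [mi ne]] := caseB (maxn m i1).
have ii : (i1 <= i)%N by apply: leq_trans (leq_maxr m i1) mi.
have [_ [e|e]] := Hi1 ii; first by [].
by exists i; split => //; exact: leq_trans (leq_maxl m i1) mi.
Qed.

Lemma unbch B m : exists t, [/\ (m <= t)%N, ch t & (B < Defs.rank W (w t))%N].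
Proof.
elim: B => [|B [t [mt cht Bt]]].
  have [t [mt cht]] := chex m; exists t; split => //.
  by apply: leq_ltn_trans (leq0n _) (rank_lt _); case: cht.
have [t' [tt' cht']] := chex t.+1; exists t'; split => //.
  exact: leq_trans mt (ltnW tt').
exact: leq_ltn_trans Bt (F2' cht tt').
Qed.

Variable t0 : nat.
Hypothesis cht0 : ch t0.
Hypothesis Nt0 : (N1 < Defs.rank W (w t0))%N.

Lemma rank_big s : (t0 <= s)%N -> (N1 < Defs.rank W (w s))%N.
Proof.
rewrite leq_eqVlt => /orP[/eqP <-//|ts].
exact: ltn_trans Nt0 (F2' cht0 ts).
Qed.

Lemma push_s s : (t0 <= s)%N ->
  p (h * w s)%g = (h * p (w s))%g /\ Defs.rank W (h * w s)%g = Defs.rank W (w s).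
Proof.
move=> ts; have [it0 _] := cht0.
have [[j Wj] _] := Hi1 (leq_trans it0 ts).
have Nj : (N1 < j)%N by rewrite -(rankE' Wj); exact: rank_big.
have [S Hp] := HN1 Nj; split; first exact: Hp.
by rewrite (rankE' Wj); apply: rankE; apply: S; exists (w s).
Qed.

Definition y0 := (h * p (w t0))%g.

Lemma G1 s : (t0 <= s)%N -> ch s -> forall n z, iter n p (h * w s)%g = z ->
  (exists s', [/\ (t0 <= s')%N, (s' <= s)%N, ch s' & z = (h * w s')%g]) \/
  (exists n', iter n' p y0 = z).
Proof.
elim/ltn_ind: s => s IH ts chs [|n] z.
  by move=> <-; left; exists s; split.
rewrite iterSr (push_s ts).1.
move: ts; rewrite leq_eqVlt => /orP[/eqP ets|ts].
  by rewrite -ets => e; right; exists n.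
have [s'' [a b c d]] := par_ch cht0 ts.
rewrite d => e; case: (IH s'' b a c n z e) => [[s' [x1 x2 x3 x4]]|]; last by right.
by left; exists s'; split => //; exact: leq_trans x2 (ltnW b).
Qed.

Lemma Csep t : ch t -> (t0 < t)%N -> Sset (Qf true (w t)) (lact h w) ->
  exists n, iter n p y0 = w t.
Proof.
move=> cht tt /(_ (maxn N2.+1 t.+1)) [i [Mi [j [Mj [Wj [n en]]]]]].
rewrite /lact in Wj en.
have Nj : (N2 < j)%N by apply: leq_trans (leq_maxl N2.+1 t.+1) Mj.
have ti : (t < i)%N by apply: leq_trans (leq_maxr N2.+1 t.+1) Mi.
rewrite (pull Nj Wj) in en.
have [s [a b c d]] := par_ch cht0 (ltn_trans tt ti).
rewrite d in en.
case: (G1 a c en) => [[s' [x1 x2 x3 x4]]|//].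
exfalso; have [_ rk] := push_s x1.
have rr : Defs.rank W (w t) = Defs.rank W (w s') by rewrite x4 rk.
case: (ltngtP s' t) => [lt|lt|e].
- by have := F2' x3 lt; rewrite rr ltnn.
- by have := F2' cht lt; rewrite rr ltnn.
apply: h1; apply: (mulIg (w t)); by rewrite mul1g {2}x4 e.
Qed.

Lemma Csep_w t : ch t -> Sset (Qf true (w t)) w.
Proof.
move=> cht M; have [i [ti [j [Mj Wj]]]] := L_unb M (maxn M t.+1).
exists i; split; first exact: leq_trans (leq_maxl M t.+1) ti.
exists j; split => //; split => //.
by apply: F1 => //; exact: leq_trans (leq_maxr M t.+1) ti.
Qed.

Lemma final_contra : (forall t, ch t -> (t0 < t)%N -> exists n, iter n p y0 = w t) -> False.
Proof.
move=> Hall.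
case: (pselect (exists a b, iter a p y0 = iter b p y0 /\ a <> b)) => [[a [b [eab nab]]]|inj].
  have [lo [hi [elh lohi]]] : exists lo hi, iter lo p y0 = iter hi p y0 /\ (lo < hi)%N.
    by case: (ltngtP a b) => ab; [exists a, b|exists b, a|].
  have red n : exists n', (n' < hi)%N /\ iter n p y0 = iter n' p y0.
    elim/ltn_ind: n => n IH; case: (ltnP n hi) => nh; first by exists n.
    have -> : n = ((n - hi) + hi)%N by rewrite subnK.
    rewrite iterD -elh -iterD.
    apply: IH; lia.
  have [Bd HB] := fin_bound (fun k => Defs.rank W (iter k p y0)) hi.
  have [t [tt cht Bt]] := unbch Bd t0.+1.
  have [n en] := Hall t cht tt.
  have [n' [n'h e']] := red n.
  have := HB n' n'h; rewrite /= -e' en => le.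
  by move: Bt; rewrite ltnNge le.
have inj' a b : iter a p y0 = iter b p y0 -> a = b.
  move=> e; case: (pselect (a = b)) => // ne; exfalso; apply: inj; exists a, b; by split.
have [t1 [lt1 ch1]] := chex t0.+1.
have [A0 e1] := Hall t1 ch1 lt1.
have claim K : exists t n, [/\ ch t, (t0 < t)%N, iter n p y0 = w t & (n + K <= A0)%N].
  elim: K => [|K [t [n [cht tt en nK]]]]; first by exists t1, A0; rewrite addn0.
  have [t' [tt' cht']] := chex t.+1.
  have tt0' : (t0 < t')%N by apply: ltn_trans tt tt'.
  have [n' en'] := Hall t' cht' tt0'.
  have [m em] := F1 cht tt'.
  have : iter n p y0 = iter (m.+1 + n') p y0 by rewrite en iterD en' iterSr em.
  move=> /inj' enm; exists t', n'; split => //; lia.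
have [t [n [_ _ _ nK]]] := claim A0.+1.
lia.
Qed.

End Good2.

Lemma sep_good w h : good w -> h <> 1%g ->
  exists b g, Sset (Qf b g) w /\ ~ Sset (Qf b g) (lact h w).
Proof.
move=> gw h1.
have [i1 Hi1] := good_i1 gw.
have [_ [_ Hunb]] := gw.
have [N1 HN1] := H2 h.
have [N2 HN2] := H2 (h^-1)%g.
case: (pselect (exists m, forall i, (m <= i)%N -> p (w i.+1) = p (w i))) => [[m Hm]|nA].
  by exists false, (p (w m)); exact: (caseA Hi1 Hunb h1 HN2 Hm).
have cB : forall m, exists i, (m <= i)%N /\ p (w i.+1) <> p (w i).
  move=> m; case: (pselect (exists i, (m <= i)%N /\ p (w i.+1) <> p (w i))) => // ni.
  exfalso; apply: nA; exists m => i mi.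
  by case: (pselect (p (w i.+1) = p (w i))) => // ne; exfalso; apply: ni; exists i.
have [t0 [_ cht0 Nt0]] := unbch Hi1 cB N1 0%N.
case: (pselect (exists t, [/\ ch w i1 t, (t0 < t)%N & ~ Sset (Qf true (w t)) (lact h w)]))
  => [[t [cht tt ns]]|nt].
  by exists true, (w t); split => //; exact: (Csep_w Hi1 Hunb cht).
exfalso; apply: (final_contra Hi1 cB Nt0) => t cht tt.
apply: (Csep Hi1 h1 HN1 HN2 cht0 Nt0 cht tt).
by case: (pselect (Sset (Qf true (w t)) (lact h w))) => // nS; exfalso; apply: nt; exists t.
Qed.

Definition Fam (k : nat) : set (Omega G) :=
  match @unpickle (bool * G)%type k with
  | Some bg => Sset (Qf bg.1 bg.2)
  | None => set0
  end.

Lemma Fam_inv k : shift_invariant (Fam k).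
Proof.
rewrite /Fam; case: (unpickle k) => [[b g]|].
  by apply: Sset_inv => M x; exact: Qf_mono.
by split; [exact: measurable0|rewrite preimage_set0].
Qed.

Lemma Fam_pick b g : Fam (pickle (b, g)) = Sset (Qf b g).
Proof. by rewrite /Fam pickleK. Qed.

End Comb.

Unset Implicit Arguments.
Set Strict Implicit.

Theorem lemma1 (R : realType) (G : countGroupType) (nu : G -> R)
  (nu_full : forall g : G, (0 < nu g)%R)
  (nu_prob : (\esum_(g in [set: G]) (nu g)%:E)%R = 1%E)
  (P : probability (Omega G) R) (P_law : random_walk_law nu P)
  (W W' : nat -> set G)
  (W'W : forall i, W' i `<=` W i)
  (Wdisj : forall i j : nat, i <> j -> W i `&` W j = set0)
  (p : G -> G)
  (H1 : forall g : G, (\bigcup_i W i) g -> (rank W (p g) < rank W g)%N)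
  (H2 : forall h : G, exists N : nat, forall i : nat, (N < i)%N ->
      [set (h * w)%g | w in W' i] `<=` W i /\
      (forall w : G, W' i w -> p (h * w)%g = (h * p w)%g))
  (H3 : {ae P, forall z : Omega G, exists i0 : nat, forall i : nat, (i0 < i)%N ->
      exists j : nat, W' j (z i)})
  (H4 : {ae P, forall z : Omega G, exists i0 : nat, forall i : nat, (i0 < i)%N ->
      p (z i.+1) = p (z i) \/ p (z i.+1) = z i})
  (H5 : {ae P, forall z : Omega G, forall M : nat, exists i : nat,
      (M < rank W (z i))%N}) :
  boundary_nontrivial P /\ boundary_essentially_free P.
Proof.
have free : boundary_essentially_free P.
  move=> h h1; exists (Fam W' p); split; first exact: Fam_inv.
  have aegood : {ae P, forall w : Omega G, good W W' p w}.
    apply: (filterS3 (ae_filter_ringOfSetsType P) _ H3 H4 H5).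
    by move=> w a b c; split => //; split.
  apply: (filterS (F := almost_everywhere P) _ aegood) => w gw.
  have [b [g [a c]]] := sep_good W'W Wdisj H1 H2 gw h1.
  by exists (pickle (b, g)); left; rewrite Fam_pick; split.
split => //.
have [h h1] : exists h : G, h <> 1%g.
  case: (pselect (exists h : G, h <> 1%g)) => // nh; exfalso.
  have all1 (g : G) : g = 1%g.
    by case: (pselect (g = 1%g)) => // ne; exfalso; apply: nh; exists g.
  have : {ae P, forall w : Omega G, False}.
    apply: (filterS (F := almost_everywhere P) _ H5) => w H; have [i Hi] := H (rank W 1%g).
    by rewrite (all1 (w i)) ltnn in Hi.
  exact: ae_false.
exact: (nontriv_of_free nu_full P_law h1 free).
Qed.
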